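(* Let $g \in \mathbb{R}$. For all $p, q \in \Delta_d^{\mathcal{S}}$, \[ \ell^\Theta_{\mathrm C,\infty}\bigl(\mathcal G_g(p), \mathcal G_g(q)\bigr) \le \ell^\Theta_{\mathrm C,\infty}(p,q). \] In particular, $\mathcal G := \mathcal G_{\bar r^\pi}$ is non-expansive in $\ell^\Theta_{\mathrm C,\infty}$.
   Context: Finite MDP with state set $\mathcal{S}=\{1,\dots,m\}$, finite action set $\mathcal A$, deterministic reward function $R:\mathcal S\times\mathcal A\to[0,1]$, and a fixed policy $\pi$ inducing a transition matrix $P=(P_{ij})$ on $\mathcal S$ that is irreducible and aperiodic with stationary distribution $\mu$. For $i,j\in\mathcal S$, $R_{ij}$ denotes the (finite-valued, $[0,1]$-valued) random one-step reward conditioned on the transition $i\to j$. The gain is $\bar r^\pi=\sum_i\mu_i\sum_j P_{ij}\mathbb E[R_{ij}]$. For $g\in\mathbb R$, $\nu^{(g)}_{ij}:=\mathrm{Law}(R_{ij}-g)$. $\mathcal P_2(\mathbb R)$ is the set of probability laws on $\mathbb R$ with finite second moment; $\mathcal F^{\mathcal S}$ is the set of families $\eta=(\eta_i)_{i\in\mathcal S}$ with $\eta_i\in\mathcal P_2(\mathbb R)$. The operator $\mathcal T_g:\mathcal F^{\mathcal S}\to\mathcal F^{\mathcal S}$ is $(\mathcal T_g\eta)_i:=\sum_j P_{ij}(\nu^{(g)}_{ij}\ast\eta_j)$ ($\ast$ = convolution). Categorical support: $\Theta=\{\theta_1<\dots<\theta_d\}\subset\mathbb R$ with constant stride $\Delta=\theta_{k+1}-\theta_k>0$.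 $\Delta_d$ is the probability simplex in $\mathbb R^d$ and $\Delta_d^{\mathcal S}$ the set of families $p=(p_i)_{i\in\mathcal S}$, $p_i\in\Delta_d$. For $u\in\Delta_d$, $c\in\mathbb R$, $\eta^{u,c}:=\sum_{k=1}^d u_k\delta_{\theta_k+c}$, and for $p\in\Delta_d^{\mathcal S}$, $\eta^{p,c}:=(\eta^{p_i,c})_{i\in\mathcal S}$. The categorical projection $\Pi^{\Theta}_{\mathrm C}$ maps a point mass $\delta_x$ to $\delta_{\theta_1}$ if $x\le\theta_1$, to $\delta_{\theta_d}$ if $x\ge\theta_d$, and to $\frac{\theta_{k+1}-x}{\Delta}\delta_{\theta_k}+\frac{x-\theta_k}{\Delta}\delta_{\theta_{k+1}}$ if $\theta_k\le x\le\theta_{k+1}$; it is extended to laws $\eta$ by $\Pi^\Theta_{\mathrm C}\eta=\int\Pi^\Theta_{\mathrm C}\delta_x\,\eta(\mathrm dx)$, and applied statewise to families. For $g\in\mathbb R$ and $p\in\Delta_d^{\mathcal S}$, $\mathcal G_g(p)\in\Delta_d^{\mathcal S}$ is the unique family $q$ with $\Pi^\Theta_{\mathrm C}\bigl((\mathcal T_g\eta^{p,0})_i\bigr)=\eta^{q_i,0}$ for all $i$. Coordinate Cramér metric: for $u\in\Delta_d$, $F_u(\theta_k):=\sum_{j=1}^k u_j$; $\ell^\Theta_{\mathrm C}(u,v)^2:=\Delta\sum_{k=1}^{d-1}(F_u(\theta_k)-F_v(\theta_k))^2$; for $p,q\in\Delta_d^{\mathcal S}$, $\ell^\Theta_{\mathrm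 C,\infty}(p,q):=\max_{i}\ell^\Theta_{\mathrm C}(p_i,q_i)$. *)

(* Defs.v *)
From HB Require Import structures.
From mathcomp Require Import all_boot all_order all_algebra.
From mathcomp Require Import reals.
Set Implicit Arguments.
Unset Strict Implicit.
Unset Printing Implicit Defensive.
Import Order.TTheory GRing.Theory Num.Theory.
Local Open Scope ring_scope.

Section Defs.
Variable R : realType.

(* ---------- Finitely supported laws on R ----------
   A law is a finite list of (atom, weight) pairs; the law it denotes is
   sum_a weight_a * delta_{atom_a}.  Every law appearing in the statement
   (reward laws, categorical laws, their convolutions, mixtures and
   projections) is finitely supported. *)
Definition dlaw := seq (R * R).

Definition is_prob_dlaw (mu : dlaw) : Prop :=
  (forall a, a \in mu -> 0 <= a.2) /\ \sum_(a <- mu) a.2 = 1.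

Definition dmass (mu : dlaw) (x : R) : R := \sum_(a <- mu | a.1 == x) a.2.

Definition dmean (mu : dlaw) : R := \sum_(a <- mu) a.1 * a.2.

Definition dirac (x : R) : dlaw := [:: (x, 1)].

Definition dshift (c : R) (mu : dlaw) : dlaw := [seq (a.1 + c, a.2) | a <- mu].

Definition dscale (c : R) (mu : dlaw) : dlaw := [seq (a.1, c * a.2) | a <- mu].

Definition dconv (mu nu : dlaw) : dlaw :=
  [seq (a.1 + b.1, a.2 * b.2) | a <- mu, b <- nu].

Definition dsum (S : finType) (F : S -> dlaw) : dlaw :=
  flatten [seq F j | j <- enum S].

(* ---------- MDP / Markov-chain data ----------
   P : S -> S -> R is the transition matrix induced by the policy,
   rew i j the (finitely supported) law of R_ij. *)
Definition stochastic (S : finType) (P : S -> S -> R) : Prop :=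
  (forall i j, 0 <= P i j) /\ (forall i, \sum_j P i j = 1).

Definition reward_laws (S : finType) (rew : S -> S -> dlaw) : Prop :=
  forall i j, is_prob_dlaw (rew i j) /\
              (forall a, a \in rew i j -> 0 <= a.1 <= 1).

Definition stationary (S : finType) (P : S -> S -> R) (mu : S -> R) : Prop :=
  (forall i, 0 <= mu i) /\ \sum_i mu i = 1 /\
  (forall j, \sum_i mu i * P i j = mu j).

Definition gain (S : finType) (P : S -> S -> R) (rew : S -> S -> dlaw)
  (mu : S -> R) : R :=
  \sum_i mu i * \sum_j P i j * dmean (rew i j).

Definition nu_g (S : finType) (rew : S -> S -> dlaw) (g : R) (i j : S) : dlaw :=
  dshift (- g) (rew i j).

Definition Tg (S : finType) (P : S -> S -> R) (rew : S -> S -> dlaw) (g : R)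
  (eta : S -> dlaw) (i : S) : dlaw :=
  dsum (fun j => dscale (P i j) (dconv (nu_g rew g i j) (eta j))).

(* ---------- Categorical support ----------
   Theta = {theta_0 < ... < theta_{d-1}} (0-indexed), theta_k = th1 + k*Delta,
   i.e. first atom th1 and constant stride Delta. *)
Definition theta (th1 Delta : R) (k : nat) : R := th1 + k%:R * Delta.

Definition proj_pt (d : nat) (th1 Delta : R) (x : R) : dlaw :=
  let th := theta th1 Delta in
  if x <= th 0%N then dirac (th 0%N)
  else if th d.-1 <= x then dirac (th d.-1)
  else flatten [seq if (th k <= x) && (x < th k.+1)
                    then [:: (th k, (th k.+1 - x) / Delta);
                             (th k.+1, (x - th k) / Delta)]
                    else [::]
               | k <- iota 0 d.-1].

Definition dproj (d : nat) (th1 Delta : R) (mu : dlaw) : dlaw :=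
  flatten [seq dscale a.2 (proj_pt d th1 Delta a.1) | a <- mu].

Definition cat_law (d : nat) (th1 Delta : R) (u : 'I_d -> R) (c : R) : dlaw :=
  [seq (theta th1 Delta (nat_of_ord k) + c, u k) | k : 'I_d <- enum 'I_d].

Definition in_simplex (d : nat) (u : 'I_d -> R) : Prop :=
  (forall k, 0 <= u k) /\ \sum_k u k = 1.

Definition in_simplex_fam (S : finType) (d : nat) (p : S -> 'I_d -> R) : Prop :=
  forall i, in_simplex (p i).

(* G_g(p): the family q with Pi_C((T_g eta^{p,0})_i) = eta^{q_i,0};
   q_i k is the mass of Pi_C((T_g eta^{p,0})_i) at theta_k. *)
Definition Gop (S : finType) (P : S -> S -> R) (rew : S -> S -> dlaw) (g : R)
  (d : nat) (th1 Delta : R) (p : S -> 'I_d -> R) : S -> 'I_d -> R :=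
  fun i k => dmass (dproj d th1 Delta
                      (Tg P rew g (fun j => cat_law th1 Delta (p j) 0) i))
                   (theta th1 Delta k).

Definition cdf (d : nat) (u : 'I_d -> R) (k : 'I_d) : R :=
  \sum_(j < d | (j <= k)%N) u j.

(* l_C(u,v)^2 = Delta * sum_{k=1}^{d-1} (F_u(theta_k) - F_v(theta_k))^2
   (1-indexed k = 1..d-1 is 0-indexed k = 0..d-2) *)
Definition cramer (d : nat) (Delta : R) (u v : 'I_d -> R) : R :=
  Num.sqrt (Delta * \sum_(k < d | (k < d.-1)%N) (cdf u k - cdf v k) ^+ 2).

Definition cramer_inf (S : finType) (d : nat) (Delta : R)
  (p q : S -> 'I_d -> R) : R :=
  \big[Num.max/0]_(i : S) cramer Delta (p i) (q i).

End Defs.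

(* Main.v *)
Require Import Defs.
From HB Require Import structures.
From mathcomp Require Import all_boot all_order all_algebra.
From mathcomp Require Import reals.
From mathcomp.algebra_tactics Require Import ring lra.
Import Order.TTheory GRing.Theory Num.Theory.
Local Open Scope ring_scope.

Section Aux.
Variable R : realType.

Lemma cs_ineq (I : eqType) (s : seq I) (w x : I -> R) :
  (forall i, i \in s -> 0 <= w i) ->
  (\sum_(i <- s) w i * x i) ^+ 2 <=
  (\sum_(i <- s) w i) * \sum_(i <- s) w i * x i ^+ 2.
Proof.
move=> w0.
set W := \sum_(i <- s) w i; set m := \sum_(i <- s) w i * x i;
set Q := \sum_(i <- s) w i * x i ^+ 2.
have H : \sum_(a <- s) \sum_(b <- s) w a * w b * (x a - x b) ^+ 2
         = 2 * (W * Q - m ^+ 2).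
  transitivity (\sum_(a <- s) (w a * x a ^+ 2 * W + w a * Q - 2 * (w a * x a) * m)).
    apply: eq_bigr => a _.
    rewrite /W /Q /m !mulr_sumr -!big_split /= -sumrN -big_split /=.
    by apply: eq_bigr => b _; ring.
  rewrite sumrB big_split /= -!mulr_suml -mulr_sumr -/Q -/W -/m.
  clearbody W m Q. ring.
have : 0 <= \sum_(a <- s) \sum_(b <- s) w a * w b * (x a - x b) ^+ 2.
  rewrite big_seq; apply: sumr_ge0 => a ina; rewrite big_seq; apply: sumr_ge0 => b inb.
  by apply: mulr_ge0; [apply: mulr_ge0; exact: w0 | exact: sqr_ge0].
rewrite H => h; lra.
Qed.


Definition clamp (t : R) : R := if t <= 0 then 0 else if 1 <= t then 1 else t.

Lemma clamp_ge0 t : 0 <= clamp t.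
Proof. rewrite /clamp; case: ifP => h; first by []; case: ifP => h2 //; lra. Qed.
Lemma clamp_le1 t : clamp t <= 1.
Proof. rewrite /clamp; case: ifP => h; first lra; case: ifP => h2 //; lra. Qed.
Lemma clamp_mono t u : t <= u -> clamp t <= clamp u.
Proof.
move=> tu; rewrite /clamp.
case: ifP => h1; case: ifP => h2 //; try lra;
  case: ifP => h3 //; try case: ifP => h4 //; lra.
Qed.

Definition Wt (s : R) (k l : nat) : R :=
  clamp (k.+1%:R - (s + l%:R)) - clamp (k.+1%:R - (s + l.+1%:R)).

Lemma Wt_ge0 s k l : 0 <= Wt s k l.
Proof.
rewrite /Wt subr_ge0; apply: clamp_mono; rewrite -natr1; lra.
Qed.

Lemma Wt_row s k N : \sum_(l < N) Wt s k l <= 1.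
Proof.
rewrite (eq_bigr (fun l : 'I_N => - ((fun l : nat => clamp (k.+1%:R - (s + l%:R))) (nat_of_ord l).+1
    - (fun l : nat => clamp (k.+1%:R - (s + l%:R))) (nat_of_ord l)))); last first.
  by move=> l _; rewrite /Wt opprB.
rewrite sumrN -(big_mkord xpredT (fun l => ((fun l : nat => clamp (k.+1%:R - (s + l%:R))) l.+1
    - (fun l : nat => clamp (k.+1%:R - (s + l%:R))) l))) telescope_sumr //=.
have := clamp_ge0 (k.+1%:R - (s + N%:R)); have := clamp_le1 (k.+1%:R - (s + 0%:R)); lra.
Qed.

Lemma Wt_col s l N : \sum_(k < N) Wt s k l <= 1.
Proof.
rewrite (eq_bigr (fun k : 'I_N => ((fun k : nat => clamp (k%:R - (s + l%:R))) (nat_of_ord k).+1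
    - (fun k : nat => clamp (k%:R - (s + l%:R))) (nat_of_ord k)))); last first.
  move=> k _; rewrite /Wt /=; congr (_ - clamp _); rewrite -!natr1; ring.
rewrite -(big_mkord xpredT (fun k => ((fun k : nat => clamp (k%:R - (s + l%:R))) k.+1
    - (fun k : nat => clamp (k%:R - (s + l%:R))) k))) telescope_sumr //=.
have := clamp_ge0 (0%:R - (s + l%:R)); have := clamp_le1 (N%:R - (s + l%:R)); lra.
Qed.

Lemma schur s N (D : nat -> R) :
  \sum_(k < N) (\sum_(l < N) Wt s k l * D l) ^+ 2 <= \sum_(l < N) D l ^+ 2.
Proof.
apply: (@le_trans _ _ (\sum_(k < N) \sum_(l < N) Wt s k l * D l ^+ 2)).
  apply: ler_sum => k _.
  apply: le_trans; first (apply: cs_ineq; by move=> l _; apply: Wt_ge0).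
  rewrite -[X in _ <= X]mul1r; apply: ler_wpM2r; last exact: Wt_row.
  by apply: sumr_ge0 => l _; rewrite mulr_ge0 ?Wt_ge0 ?sqr_ge0.
rewrite exchange_big /=; apply: ler_sum => l _.
rewrite -mulr_suml -[X in _ <= X]mul1r; apply: ler_wpM2r; first exact: sqr_ge0.
exact: Wt_col.
Qed.


Definition dint (L : dlaw R) (f : R -> R) : R := \sum_(a <- L) a.2 * f a.1.

Lemma dint_Tg (S : finType) (P : S -> S -> R) rew g eta i f :
  dint (Tg P rew g eta i) f =
  \sum_j P i j * \sum_(r <- rew i j) r.2 * \sum_(b <- eta j) b.2 * f (r.1 + - g + b.1).
Proof.
rewrite /dint /Tg /dsum big_flatten /= big_map big_enum /=.
apply: eq_bigr => j _.
rewrite /dscale /dconv /nu_g /dshift big_map /= big_allpairs_dep /= big_map /= mulr_sumr.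
apply: eq_bigr => r _; rewrite !mulr_sumr; apply: eq_bigr => b _ /=; ring.
Qed.


Lemma dint_cat_law d th1 Delta (u : 'I_d -> R) c f :
  dint (cat_law th1 Delta u c) f = \sum_(l : 'I_d) u l * f (theta th1 Delta l + c).
Proof. by rewrite /dint /cat_law big_map big_enum. Qed.

Lemma dint_dproj d th1 Delta (L : dlaw R) G :
  dint (dproj d th1 Delta L) G = dint L (fun x => dint (proj_pt d th1 Delta x) G).
Proof.
rewrite /dint /dproj big_flatten /= big_map; apply: eq_bigr => a _.
by rewrite /dscale big_map mulr_sumr; apply: eq_bigr => b _ /=; rewrite mulrA.
Qed.

Lemma dmassE (M : dlaw R) x : dmass M x = \sum_(a <- M) a.2 * (a.1 == x)%:R.
Proof.
rewrite /dmass big_mkcond; apply: eq_bigr => a _.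
by case: eqP => _; rewrite ?mulr1 ?mulr0.
Qed.

Lemma cdf_dmass d (M : dlaw R) (th : nat -> R) (k : 'I_d) :
  cdf (fun j : 'I_d => dmass M (th j)) k =
  dint M (fun y => \sum_(j < d | (j <= k)%N) (y == th j)%:R).
Proof.
rewrite /cdf /dint; under eq_bigr do rewrite dmassE.
rewrite exchange_big /=; apply: eq_bigr => a _; by rewrite mulr_sumr.
Qed.

Lemma clamp1 t : 1 <= t -> clamp t = 1.
Proof. move=> h; rewrite /clamp; case: ifP => h1 //; [lra | by rewrite h]. Qed.
Lemma clamp0 t : t <= 0 -> clamp t = 0.
Proof. by move=> h; rewrite /clamp h. Qed.
Lemma clampid t : 0 <= t <= 1 -> clamp t = t.
Proof.
move=> /andP[h1 h2]; rewrite /clamp; case: ifP => h3; first lra.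
case: ifP => h4 //; lra.
Qed.


Section Proj.
Variables (th1 Delta : R) (n : nat).
Hypothesis Dpos : 0 < Delta.

Definition gk (k : nat) (y : R) : R :=
  \sum_(j < n.+2 | (j <= k)%N) (y == theta th1 Delta j)%:R.
Definition hk (k : nat) (x : R) : R := clamp (k.+1%:R - (x - th1) / Delta).

Lemma theta_inj a b : (theta th1 Delta a == theta th1 Delta b) = (a == b).
Proof.
rewrite /theta (inj_eq (addrI _)) (inj_eq (mulIf _)) ?eqr_nat //.
by rewrite gt_eqF.
Qed.

Lemma gk_theta k m : (m < n.+2)%N -> gk k (theta th1 Delta m) = (m <= k)%:R.
Proof.
move=> mlt; rewrite /gk.
under eq_bigr do rewrite theta_inj.
case: (leqP m k) => hmk.
  rewrite (bigD1 (Ordinal mlt)) //= eqxx big1 ?addr0 // => j /andP[_ hj].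
  have : m != j by apply: contra hj => /eqP e; apply/eqP/val_inj.
  by move/negbTE ->.
rewrite big1 // => j hj.
have : m != j by apply/eqP => e; move: hj; rewrite -e leqNgt hmk.
by move/negbTE ->.
Qed.

Lemma theta_le j x : (theta th1 Delta j <= x) = (j%:R <= (x - th1) / Delta).
Proof.
rewrite ler_pdivlMr // /theta; apply/idP/idP => h; lra.
Qed.

Lemma theta_ge j x : (x <= theta th1 Delta j) = ((x - th1) / Delta <= j%:R).
Proof.
rewrite ler_pdivrMr // /theta; apply/idP/idP => h; lra.
Qed.

Lemma theta_gt j x : (x < theta th1 Delta j) = ((x - th1) / Delta < j%:R).
Proof.
rewrite ltr_pdivrMr // /theta; apply/idP/idP => h; lra.
Qed.

Lemma proj_ptE k x : (k < n.+1)%N ->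
  dint (proj_pt n.+2 th1 Delta x) (gk k) = hk k x.
Proof.
move=> kn; rewrite /proj_pt; change (n.+2).-1 with n.+1.
set t := (x - th1) / Delta.
have Dn0 : Delta != 0 by rewrite gt_eqF.
have kR : k.+1%:R <= n.+1%:R :> R by rewrite ler_nat.
case: ifP => h0.
  rewrite /dint /dirac big_seq1 /= gk_theta // mul1r /hk clamp1 //.
  move: h0; rewrite theta_ge -/t => h0.
  have : 1 <= k.+1%:R :> R by rewrite ler1n.
  lra.
case: ifP => h1.
  rewrite /dint /dirac big_seq1 /= gk_theta // mul1r.
  have -> : (n < k)%N = false by rewrite ltnNge -ltnS kn.
  rewrite /hk clamp0 //; move: h1; rewrite theta_le -/t => h1; lra.
have thd1 j : (theta th1 Delta j - x) / Delta = j%:R - t.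
  by rewrite /t /theta; field.
have thd2 j : (x - theta th1 Delta j) / Delta = t - j%:R.
  by rewrite /t /theta; field.
rewrite /dint big_flatten big_map.
rewrite (eq_big_seq (fun m => ((((theta th1 Delta m <= x)%R)%:R
   - ((theta th1 Delta m.+1 <= x)%R)%:R) * hk k x))); last first.
  move=> m; rewrite mem_iota add0n => /andP[_ mlt].
  have mlt2 : (m < n.+2)%N by apply: leqW.
  case: ifP => hc.
    rewrite big_cons big_cons big_nil /= gk_theta // gk_theta // thd1 thd2.
    move: hc; rewrite !theta_le !theta_gt -/t => /andP[hc1 hc2].
    have -> : (m.+1%:R <= t) = false by apply/negbTE; rewrite -ltNge.
    rewrite hc1 /hk -/t /= ?mulr1n ?mulr0n.
    have e1 : m.+1%:R = m%:R + 1 :> R by rewrite natr1.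
    have e2 : k.+1%:R = k%:R + 1 :> R by rewrite natr1.
    case: (ltngtP m k) => hmk.
    - rewrite clamp1; last first.
        have : m.+1%:R <= k%:R :> R by rewrite ler_nat.
        lra.
      rewrite /= ?mulr1n; lra.
    - rewrite clamp0; first by rewrite /= ?mulr0n; lra.
      have : k.+1%:R <= m%:R :> R by rewrite ler_nat.
      lra.
    - subst m; rewrite clampid; first by rewrite /= ?mulr1n ?mulr0n; lra.
      apply/andP; split; lra.
  rewrite big_nil.
  move: hc; rewrite !theta_le !theta_gt -/t => hc.
  case: (boolP (m%:R <= t)) => h2 /=.
    by move: hc; rewrite h2 /= => /negbT; rewrite -leNgt => ->; rewrite subrr mul0r.
  have -> : (m.+1%:R <= t) = false.
    apply/negbTE; move: h2; rewrite -!ltNge -natr1 => h2; lra.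
  by rewrite subrr mul0r.
rewrite -mulr_suml.
have -> : iota 0 n.+1 = index_iota 0 n.+1 by rewrite /index_iota subn0.
rewrite (eq_bigr (fun m => - ((fun m : nat => ((theta th1 Delta m <= x)%R)%:R : R) m.+1
    - (fun m : nat => ((theta th1 Delta m <= x)%R)%:R : R) m))); last first.
  by move=> m _; rewrite opprB.
rewrite sumrN telescope_sumr // h1.
have -> : theta th1 Delta 0 <= x by apply: ltW; rewrite ltNge h0.
by rewrite /= mulr0n mulr1n sub0r opprK mul1r.
Qed.


Definition uN (u : 'I_n.+2 -> R) (l : nat) : R := u (inord l).
Definition E (u : 'I_n.+2 -> R) (m : nat) : R := \sum_(j < m) uN u j.

Lemma cdfE u (k : 'I_n.+2) : cdf u k = E u k.+1.
Proof.
rewrite /cdf /E.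
rewrite (eq_bigr (fun j : 'I_n.+2 => uN u j)); last by move=> j _; rewrite /uN inord_val.
rewrite (eq_bigl (fun j : 'I_n.+2 => (j < k.+1)%N)); last by move=> j; rewrite ltnS.
by rewrite (big_ord_narrow (ltn_ord k)).
Qed.

Lemma sumE u : \sum_k u k = E u n.+2.
Proof. by rewrite /E; apply: eq_bigr => j _; rewrite /uN inord_val. Qed.

Lemma hk_shift k c l :
  hk k (c + (theta th1 Delta l + 0)) = clamp (k.+1%:R - (c / Delta + l%:R)).
Proof.
rewrite /hk /theta; congr (clamp (_ - _)); field; by rewrite gt_eqF.
Qed.

Lemma cramerE (p q : 'I_n.+2 -> R) :
  cramer Delta p q =
  Num.sqrt (Delta * \sum_(l < n.+1) (cdf p (inord l) - cdf q (inord l)) ^+ 2).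
Proof.
rewrite /cramer; congr (Num.sqrt (_ * _)).
change (n.+2).-1 with n.+1.
rewrite (big_ord_narrow (leqnSn n.+1)).
apply: eq_bigr => l _.
have -> // : widen_ord (leqnSn n.+1) l = inord l.
by apply: val_inj; rewrite /= inordK //; apply: leqW (ltn_ord l).
Qed.

End Proj.

Lemma dint_ext (L : dlaw R) f1 f2 : (forall x, f1 x = f2 x) -> dint L f1 = dint L f2.
Proof. by move=> h; apply: eq_bigr => a _; rewrite h. Qed.

Lemma GopE (S : finType) (P : S -> S -> R) rew g th1 Delta n (Dpos : 0 < Delta)
  (p : S -> 'I_n.+2 -> R) i (k : 'I_n.+2) :
  (k < n.+1)%N ->
  cdf (Gop P rew g th1 Delta p i) k =
  \sum_j P i j * \sum_(r <- rew i j) r.2 *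
     \sum_(l < n.+2) uN n (p j) l * hk th1 Delta k (r.1 + - g + (theta th1 Delta l + 0)).
Proof.
move=> kn; rewrite /Gop cdf_dmass dint_dproj.
have pt x : dint (proj_pt n.+2 th1 Delta x)
   (fun y => \sum_(j < n.+2 | (j <= k)%N) (y == theta th1 Delta j)%:R) = hk th1 Delta k x.
  exact: proj_ptE.
rewrite (dint_ext _ _ _ pt) dint_Tg; apply: eq_bigr => j _; congr (_ * _).
apply: eq_bigr => r _; congr (_ * _).
rewrite -[LHS]/(dint (cat_law th1 Delta (p j) 0) (fun y => hk th1 Delta k (r.1 - g + y))).
by rewrite dint_cat_law; apply: eq_bigr => l _; rewrite /uN inord_val.
Qed.

Lemma sbp (e f : nat -> R) N :
  \sum_(l < N.+1) e l * f l =
  \sum_(l < N) (\sum_(j < l.+1) e j) * (f l - f l.+1) + (\sum_(j < N.+1) e j) * f N.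
Proof.
elim: N => [|N IH].
  by rewrite big_ord0 add0r !big_ord_recr /= !big_ord0 !add0r.
rewrite big_ord_recr /= IH [in RHS]big_ord_recr /= [\sum_(j < N.+2) _]big_ord_recr /=.
ring.
Qed.

Lemma mix_bound (S : finType) (w : S -> R) (rl : S -> seq (R * R))
  (X : S -> R * R -> nat -> R) (B : S -> R) N :
  (forall j, 0 <= w j) -> \sum_j w j = 1 ->
  (forall j r, r \in rl j -> 0 <= r.2) -> (forall j, \sum_(r <- rl j) r.2 = 1) ->
  (forall j r, \sum_(k < N) X j r k ^+ 2 <= B j) ->
  \sum_(k < N) (\sum_j w j * \sum_(r <- rl j) r.2 * X j r k) ^+ 2 <= \sum_j w j * B j.
Proof.
move=> w0 w1 r0 r1 XB.
apply: (@le_trans _ _ (\sum_(k < N) \sum_j w j * (\sum_(r <- rl j) r.2 * X j r k) ^+ 2)).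
  apply: ler_sum => k _.
  apply: le_trans; first (apply: cs_ineq => j _; exact: w0).
  by rewrite w1 mul1r.
apply: (@le_trans _ _ (\sum_(k < N) \sum_j w j * \sum_(r <- rl j) r.2 * X j r k ^+ 2)).
  apply: ler_sum => k _; apply: ler_sum => j _; apply: ler_wpM2l; first exact: w0.
  apply: le_trans; first (apply: cs_ineq => r hr; exact: r0 hr).
  by rewrite r1 mul1r.
rewrite exchange_big /=; apply: ler_sum => j _.
rewrite -mulr_sumr; apply: ler_wpM2l; first exact: w0.
rewrite exchange_big /=.
apply: (@le_trans _ _ (\sum_(r <- rl j) r.2 * B j)).
  rewrite big_seq [X in _ <= X]big_seq; apply: ler_sum => r hr.
  rewrite -mulr_sumr; apply: ler_wpM2l; first exact: r0 hr.
  exact: XB.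
by rewrite -mulr_suml r1 mul1r.
Qed.



Lemma key (S : finType) (P : S -> S -> R) rew g th1 Delta n (Dpos : 0 < Delta)
  (p q : S -> 'I_n.+2 -> R) i :
  stochastic P -> reward_laws rew -> in_simplex_fam p -> in_simplex_fam q ->
  \sum_(l < n.+1) (cdf (Gop P rew g th1 Delta p i) (inord l)
                   - cdf (Gop P rew g th1 Delta q i) (inord l)) ^+ 2
  <= \sum_j P i j * \sum_(l < n.+1) (cdf (p j) (inord l) - cdf (q j) (inord l)) ^+ 2.
Proof.
move=> [P0 P1] hrew hp hq.
pose D j (l : nat) := cdf (p j) (inord l) - cdf (q j) (inord l).
pose X j (r : R * R) (k : nat) := \sum_(m < n.+1) Wt ((r.1 + - g) / Delta) k m * D j m.
have step (l : 'I_n.+1) : cdf (Gop P rew g th1 Delta p i) (inord l)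
                   - cdf (Gop P rew g th1 Delta q i) (inord l)
     = \sum_j P i j * \sum_(r <- rew i j) r.2 * X j r l.
  have lk : ((inord l : 'I_n.+2) < n.+1)%N by rewrite inordK //; apply: leqW (ltn_ord l).
  rewrite !GopE // -sumrB; apply: eq_bigr => j _; rewrite -mulrBr; congr (_ * _).
  rewrite -sumrB; apply: eq_bigr => r _; rewrite -mulrBr; congr (_ * _).
  rewrite -sumrB inordK; last exact: leqW (ltn_ord l).
  under eq_bigr do rewrite -mulrBl.
  rewrite (sbp (fun m => uN n (p j) m - uN n (q j) m)
     (fun m => hk th1 Delta l (r.1 + - g + (theta th1 Delta m + 0))) n.+1).
  have -> : \sum_(m < n.+2) (uN n (p j) m - uN n (q j) m) = 0.
    rewrite sumrB -/(E n (p j) n.+2) -/(E n (q j) n.+2) -!sumE.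
    by have [_ ->] := hp j; have [_ ->] := hq j; rewrite subrr.
  rewrite mul0r addr0; apply: eq_bigr => m _.
  rewrite mulrC; congr (_ * _).
    by rewrite /Wt !hk_shift.
  by rewrite /D !cdfE sumrB inordK //; apply: leqW (ltn_ord m).
rewrite (eq_bigr (fun l : 'I_n.+1 => (\sum_j P i j * \sum_(r <- rew i j) r.2 * X j r l) ^+ 2));
  last by move=> l _; rewrite step.
apply: mix_bound => //.
- by move=> j r hr; have [[h1 h2] _] := hrew i j; apply: h1.
- by move=> j; have [[h1 h2] _] := hrew i j.
move=> j r; exact: schur.
Qed.

End Aux.

Theorem theorem1 (R : realType) (S : finType) (P : S -> S -> R)
  (rew : S -> S -> dlaw R) (mu : S -> R) (d : nat) (th1 Delta : R) :
  stochastic P -> reward_laws rew -> stationary P mu -> 0 < Delta ->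
  (forall (g : R) (p q : S -> 'I_d -> R),
     in_simplex_fam p -> in_simplex_fam q ->
     cramer_inf Delta (Gop P rew g th1 Delta p) (Gop P rew g th1 Delta q)
       <= cramer_inf Delta p q) /\
  (forall p q : S -> 'I_d -> R,
     in_simplex_fam p -> in_simplex_fam q ->
     cramer_inf Delta (Gop P rew (gain P rew mu) th1 Delta p)
                      (Gop P rew (gain P rew mu) th1 Delta q)
       <= cramer_inf Delta p q).
Proof.
move=> hP hrew hmu Dpos.
have main : forall (g : R) (p q : S -> 'I_d -> R),
     in_simplex_fam p -> in_simplex_fam q ->
     cramer_inf Delta (Gop P rew g th1 Delta p) (Gop P rew g th1 Delta q)
       <= cramer_inf Delta p q.
  move=> g p q hp hq.
  have M0 : 0 <= cramer_inf Delta p q by rewrite /cramer_inf; apply: bigmax_ge_id.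
  rewrite {1}/cramer_inf; apply: bigmax_le => // i _.
  move: p q hp hq M0 i; case: d => [|[|n]] p q hp hq M0 i.
  - by rewrite /cramer big_ord0 mulr0 sqrtr0.
  - rewrite /cramer big1 ?mulr0 ?sqrtr0 // => -[k hk]; by rewrite /= ltn0.
  rewrite cramerE.
  set M := cramer_inf Delta p q in M0 *.
  have hB j : Delta * \sum_(l < n.+1) (cdf (p j) (inord l) - cdf (q j) (inord l)) ^+ 2 <= M ^+ 2.
    have h := le_bigmax 0 (fun j => cramer Delta (p j) (q j)) j.
    move: h; rewrite -/(cramer_inf Delta p q) -/M cramerE => h.
    have B0 : 0 <= Delta * \sum_(l < n.+1) (cdf (p j) (inord l) - cdf (q j) (inord l)) ^+ 2.
      by apply: mulr_ge0; [exact: ltW | apply: sumr_ge0 => l _; exact: sqr_ge0].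
    rewrite -(sqr_sqrtr B0) !expr2; apply: ler_pM => //; exact: sqrtr_ge0.
  rewrite -[M]ger0_norm // -sqrtr_sqr; apply: ler_wsqrtr.
  apply: (@le_trans _ _ (Delta * \sum_j P i j *
      \sum_(l < n.+1) (cdf (p j) (inord l) - cdf (q j) (inord l)) ^+ 2)).
    by apply: ler_wpM2l; [exact: ltW | exact: key].
  rewrite mulr_sumr.
  apply: (@le_trans _ _ (\sum_j P i j * M ^+ 2)).
    apply: ler_sum => j _; rewrite mulrCA; apply: ler_wpM2l; first by case: hP.
    exact: hB.
  by rewrite -mulr_suml; case: hP => _ ->; rewrite mul1r.
split; first exact: main.
by move=> p q; apply: main.
Qed.
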